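(* Let $\mathbb{F}$ be a field, $n\geq 1$, and $(s_0,\ldots,s_{n-1})\in\mathbb{F}^n$ a non-zero sequence with inverse form $F=\sum_{j=1-n}^{0} s_{-j}\,x^{j}z^{1-n-j}\in\mathbb{F}[x^{-1},z^{-1}]$. Then the maps $c\mapsto c^\wedge$ and $f\mapsto f^\vee$ are mutually inverse bijections $$\chi(s_0,\ldots,s_{n-1})\;\leftrightarrows\;\mathcal{I}_F\cap\mathcal{L},$$ and they preserve degree: $|c^\wedge|=|c|$ for $c\in\chi(s_0,\ldots,s_{n-1})$ and $|f^\vee|=|f|$ for $f\in\mathcal{I}_F\cap\mathcal{L}$. Consequently $\lambda(s_0,\ldots,s_{n-1})=\lambda_F$.
   Context: $R=\mathbb{F}[x,z]$; a form is a homogeneous polynomial, $|\varphi|$ denotes total degree. $M=\mathbb{F}[x^{-1},z^{-1}]$ is an $R$-module via $x^pz^q\circ x^{-u}z^{-v}=x^{p-u}z^{q-v}$ if $p\le u$ and $q\le v$, and $0$ otherwise ($p,q,u,v\ge 0$), extended bilinearly. For $F\in M$, $\mathcal{I}_F=\{\varphi\in R:\varphi\circ F=0\}$ (the annihilator ideal). $\mathcal{L}$ is the set of non-zero forms $\varphi\in R$ whose coefficient of $x^{|\varphi|}$ equals $1$ (equivalently, monic forms whose graded-lexicographic leading term, with $x\succ z$, is not divisible by $z$). A monic $c\in\mathbb{F}[x]$ of degree $l$ is a characteristic polynomial of $(s_0,\ldots,s_{n-1})$ if either $l\ge n$ or $c_ls_{k+l}+\cdots+c_0s_k=0$ for all $0\le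 k\le n-l-1$; $\chi(s_0,\ldots,s_{n-1})$ is the set of these, and $\lambda(s_0,\ldots,s_{n-1})$ is the minimal degree of an element of it (the linear complexity). $\lambda_F=\min\{|f|: f\in\mathcal{I}_F\cap\mathcal{L}\}$. Homogenisation: $c^\wedge(x,z)=z^{|c|}c(x/z)$; dehomogenisation: $f^\vee(x)=f(x,1)$. *)

(* Defs.v *)
From HB Require Import structures.
From mathcomp Require Import all_boot all_order all_algebra.
From mathcomp Require Import mpoly.
Set Implicit Arguments. Unset Strict Implicit. Unset Printing Implicit Defensive.
Import GRing.Theory.
Local Open Scope ring_scope.

Section Defs.
Variable F : fieldType.

(* R = F[x,z] is {mpoly F[2]}; variable 0 is x, variable 1 is z.            *)
Definition mon2 (a b : nat) : 'X_{1..2} := [multinom [tuple a; b]].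

(* M = F[x^-1,z^-1] is represented by {mpoly F[2]} as well, where the basis *)
(* monomial 'X_[m] with m = (u,v) stands for x^(-u) z^(-v).                  *)
Definition Mmod := {mpoly F[2]}.

(* The R-module action of R on M, extended bilinearly from                  *)
(* x^p z^q o x^-u z^-v = x^(p-u) z^(q-v) if p<=u, q<=v, and 0 otherwise.     *)
Definition act (phi : {mpoly F[2]}) (G : Mmod) : Mmod :=
  \sum_(m <- msupp phi) \sum_(m' <- msupp G | (m <= m')%MM)
     (phi@_m * G@_m') *: 'X_[(m' - m)%MM].

Definition annih (G : Mmod) (phi : {mpoly F[2]}) : Prop := act phi G = 0.

Definition tdeg (phi : {mpoly F[2]}) : nat := (msize phi).-1.

Definition is_form (phi : {mpoly F[2]}) : Prop := exists d, phi \is d.-homog.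

Definition inL (phi : {mpoly F[2]}) : Prop :=
  [/\ is_form phi, phi != 0 & phi@_(mon2 (tdeg phi) 0) = 1].

(* F = sum_{j=1-n}^0 s_{-j} x^j z^{1-n-j} = sum_{k<n} s_k x^-k z^-(n-1-k).  *)
Definition inv_form (n : nat) (s : n.-tuple F) : Mmod :=
  \sum_(k < n) s`_k *: 'X_[mon2 k (n.-1 - k)].

Definition charpoly_of (n : nat) (s : n.-tuple F) (c : {poly F}) : Prop :=
  c \is monic /\
  let l := (size c).-1 in
  ((n <= l)%N \/
   forall k, (k <= n - l - 1)%N -> \sum_(i < l.+1) c`_i * s`_(k + i) = 0).

(* homogenisation c^ (x,z) = z^|c| c(x/z) *)
Definition homogen (c : {poly F}) : {mpoly F[2]} :=
  \sum_(i < size c) c`_i *: 'X_[mon2 i ((size c).-1 - i)].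

(* dehomogenisation f^v(x) = f(x,1) *)
Definition dehomogen (f : {mpoly F[2]}) : {poly F} :=
  \sum_(m <- msupp f) f@_m *: 'X^(m ord0).

Definition is_min_nat (P : nat -> Prop) (l : nat) : Prop :=
  P l /\ forall l', P l' -> (l <= l')%N.

Definition is_lin_complexity (n : nat) (s : n.-tuple F) (l : nat) : Prop :=
  is_min_nat (fun d => exists c, charpoly_of s c /\ (size c).-1 = d) l.

Definition is_lambda_form (G : Mmod) (l : nat) : Prop :=
  is_min_nat (fun d => exists f, annih G f /\ inL f /\ tdeg f = d) l.

End Defs.

(* Main.v *)
Require Import Defs.
From HB Require Import structures.
From mathcomp Require Import all_boot all_order all_algebra.
From mathcomp Require Import mpoly.
From mathcomp Require Import zify.
From Stdlib Require Import Classical.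
Set Implicit Arguments. Unset Strict Implicit. Unset Printing Implicit Defensive.
Import GRing.Theory.
Local Open Scope ring_scope.
Section H.
Variable F : fieldType.

Lemma mon2_0 a b : mon2 a b ord0 = a. Proof. by []. Qed.
Lemma mon2_1 a b : mon2 a b ord_max = b. Proof. by []. Qed.
Lemma mnm2_eta (m : 'X_{1..2}) : m = mon2 (m ord0) (m ord_max).
Proof.
apply/mnmP => i.
have [->|->] : i = ord0 \/ i = ord_max.
  by case: i => -[|[|i]] Hi; [left|right|]; try apply/val_inj.
all: by [].
Qed.
Lemma mdeg2 (m : 'X_{1..2}) : mdeg m = (m ord0 + m ord_max)%N.
Proof. rewrite mdegE big_ord_recr big_ord_recr big_ord0 /= add0n; congr (m _ + _)%N; exact/val_inj. Qed.
Lemma mdeg_mon2 a b : mdeg (mon2 a b) = (a + b)%N.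
Proof. by rewrite mdeg2. Qed.
Lemma mon2_eq (m : 'X_{1..2}) a b : (mon2 a b == m) = (a == m ord0) && (b == m ord_max).
Proof.
apply/eqP/andP => [<-|[/eqP-> /eqP->]]; first by rewrite mon2_0 mon2_1.
by rewrite -mnm2_eta.
Qed.

Definition hsum (d : nat) (a : nat -> F) : {mpoly F[2]} :=
  \sum_(i < d.+1) a i *: 'X_[mon2 i (d - i)].

Lemma hsumE d a m : (hsum d a)@_m = if mdeg m == d then a (m ord0) else 0.
Proof.
rewrite /hsum raddf_sum /=.
under eq_bigr do rewrite mcoeffZ mcoeffX mon2_eq.
case: eqP => Hd.
- have Hlt : (m ord0 < d.+1)%N by rewrite ltnS -Hd mdeg2 leq_addr.
  rewrite (bigD1 (Ordinal Hlt)) //= eqxx /=.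
  have -> : (d - m ord0 == m ord_max)%N by rewrite -Hd mdeg2 addKn.
  rewrite mulr1 big1 ?addr0 // => i Hi.
  have -> : (i == m ord0 :> nat) = false.
    by apply/negbTE; apply: contra Hi => /eqP Hi'; apply/eqP/val_inj.
  by rewrite mulr0.
- rewrite big1 // => i _.
  case: andP => [[/eqP Hi /eqP Hj]|]; last by rewrite mulr0.
  exfalso; apply: Hd; rewrite mdeg2 -Hi -Hj subnKC //.
  by rewrite -ltnS.
Qed.

Lemma sum_msupp_widen (V : zmodType) (p : {mpoly F[2]}) (r : seq 'X_{1..2})
  (H : 'X_{1..2} -> V) :
  uniq r -> {subset msupp p <= r} -> (forall m, p@_m = 0 -> H m = 0) ->
  \sum_(m <- msupp p) H m = \sum_(m <- r) H m.
Proof.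
move=> Ur Sr H0.
rewrite [RHS](bigID (fun m => m \in msupp p)) /= [X in _ + X]big1 ?addr0; last first.
  by move=> m Hm; apply: H0; apply/eqP; rewrite mcoeff_eq0.
rewrite -[RHS]big_filter; apply: perm_big; apply: uniq_perm.
- exact: msupp_uniq.
- exact: filter_uniq.
- move=> m; rewrite mem_filter; case E: (m \in msupp p) => //=.
  by rewrite (Sr _ E).
Qed.

Definition hseq d := [seq mon2 (nat_of_ord i) (d - i) | i : 'I_d.+1 <- enum 'I_d.+1].

Lemma hseq_uniq d : uniq (hseq d).
Proof.
rewrite map_inj_uniq ?enum_uniq // => i j /(congr1 (fun m : 'X_{1..2} => m ord0)).
by rewrite !mon2_0 => /val_inj.
Qed.

Lemma hsum_supp d a : {subset msupp (hsum d a) <= hseq d}.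
Proof.
move=> m; rewrite mcoeff_msupp hsumE; have [Hd _|Hd] := eqVneq (mdeg m) d; last by rewrite eqxx.
have Hlt : (m ord0 < d.+1)%N by rewrite ltnS -Hd mdeg2 leq_addr.
apply/mapP; exists (Ordinal Hlt); first by rewrite mem_enum.
rewrite /= {1}(mnm2_eta m); congr mon2; by rewrite -Hd mdeg2 addKn.
Qed.

Lemma sum_hseq (V : zmodType) d (H : 'X_{1..2} -> V) :
  \sum_(m <- hseq d) H m = \sum_(i < d.+1) H (mon2 i (d - i)).
Proof. by rewrite big_map big_enum. Qed.

Lemma sum_hsum (V : zmodType) d a (H : 'X_{1..2} -> V) :
  (forall m, (hsum d a)@_m = 0 -> H m = 0) ->
  \sum_(m <- msupp (hsum d a)) H m = \sum_(i < d.+1) H (mon2 i (d - i)).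
Proof.
move=> H0; rewrite (sum_msupp_widen (r := hseq d)) ?hseq_uniq //.
  exact: sum_hseq.
exact: hsum_supp.
Qed.

Lemma sum_supp_pick (G : {mpoly F[2]}) u :
  \sum_(m' <- msupp G) (m' == u)%:R * G@_m' = G@_u.
Proof.
case Hu: (u \in msupp G).
  rewrite (bigD1_seq u) ?msupp_uniq //= eqxx mul1r big1 ?addr0 //.
  by move=> m /negPf ->; rewrite mul0r.
rewrite big1_seq; last first.
  move=> m /andP[_ Hm]; case: eqP => [Em|]; last by rewrite mul0r.
  by rewrite -Em Hm in Hu.
by apply/esym/eqP; rewrite mcoeff_eq0 Hu.
Qed.

Lemma actE (phi G : {mpoly F[2]}) t :
  (act phi G)@_t = \sum_(m <- msupp phi) phi@_m * G@_(m + t)%MM.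
Proof.
rewrite /act raddf_sum; apply: eq_bigr => m _.
rewrite raddf_sum big_mkcond /= -[G@_(m + t)%MM]sum_supp_pick mulr_sumr.
apply: eq_bigr => m' _.
rewrite mcoeffZ mcoeffX.
case: (boolP (m <= m')%MM) => Hle.
  have -> : ((m' - m)%MM == t) = (m' == m + t)%MM.
    apply/eqP/eqP => [<-|->]; first by rewrite addmC submK.
    by rewrite addmC addmK.
  by rewrite -mulrA (mulrC G@_m').
case: eqP => [E|]; last by rewrite !mul0r mulr0.
by rewrite E lem_addr in Hle.
Qed.

Lemma act_hsum l c n' s t :
  (act (hsum l c) (hsum n' s))@_t =
  if (l + mdeg t == n')%N then \sum_(i < l.+1) c i * s (i + t ord0)%N else 0.
Proof.
rewrite actE (sum_hsum (H := fun m => (hsum l c)@_m * (hsum n' s)@_(m + t)%MM)); last first.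
  by move=> m ->; rewrite mul0r.
transitivity (\sum_(i < l.+1) c i * (if (l + mdeg t == n')%N then s (i + t ord0)%N else 0)).
  apply: eq_bigr => i _.
  have Hi : (i <= l)%N by rewrite -ltnS.
  by rewrite !hsumE mdegD !mdeg_mon2 (subnKC Hi) eqxx mnmDE mon2_0.
by case: eqP => _ //; rewrite big1 // => i _; rewrite mulr0.
Qed.

Lemma annih_hsum l c n' s :
  act (hsum l c) (hsum n' s) = 0 <->
  ((n' < l)%N \/ forall k, (k <= n' - l)%N -> \sum_(i < l.+1) c i * s (k + i)%N = 0).
Proof.
split => [H|H].
  case: (ltnP n' l) => Hl; [by left | right => k Hk].
  have := congr1 (mcoeff (mon2 k (n' - l - k))) H.
  rewrite act_hsum mcoeff0 mdeg_mon2 subnKC // subnKC // eqxx mon2_0 => E.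
  by rewrite -[X in _ = X]E; apply: eq_bigr => i _; rewrite addnC.
apply/mpolyP => t; rewrite act_hsum mcoeff0.
case: eqP => // He; case: H => [Hl|H].
  by exfalso; move: Hl; rewrite -He ltnNge leq_addr.
rewrite -[RHS](H (t ord0)); first by apply: eq_bigr => i _; rewrite addnC.
by rewrite -He addKn mdeg2 leq_addr.
Qed.

Lemma hsum_homog d a : hsum d a \is d.-homog.
Proof.
apply/dhomogP => m; rewrite mcoeff_msupp hsumE.
by case: (mdeg m =P d) => // _; rewrite eqxx.
Qed.

End H.

Section H2.
Variable F : fieldType.
Lemma hsum_coef_top d (a : nat -> F) : (hsum d a)@_(mon2 d 0) = a d.
Proof. rewrite hsumE mdeg_mon2 addn0 eqxx. by []. Qed.
Lemma hsum_tdeg d (a : nat -> F) : a d != 0 -> tdeg (hsum d a) = d.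
Proof.
move=> Ha.
have Hn : hsum d a != 0.
  by apply: contraNneq Ha => H; rewrite -hsum_coef_top H mcoeff0.
rewrite /tdeg; apply: (dhomog_uniq Hn _ (hsum_homog d a)).
exact: dhomog_msize (hsum_homog d a).
Qed.

Lemma hsum_inL d (a : nat -> F) : a d = 1 -> inL (hsum d a).
Proof.
move=> Ha.
have Ha' : a d != 0 by rewrite Ha oner_neq0.
split.
- by exists d; apply: hsum_homog.
- by apply: contraNneq Ha' => H; rewrite -hsum_coef_top H mcoeff0.
- by rewrite hsum_tdeg // hsum_coef_top.
Qed.

Lemma dehomogen_hsum d (a : nat -> F) : dehomogen (hsum d a) = \poly_(i < d.+1) a i.
Proof.
rewrite /dehomogen (sum_hsum (H := fun m => (hsum d a)@_m *: 'X^(m ord0))); last first.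
  by move=> m ->; rewrite scale0r.
rewrite poly_def; apply: eq_bigr => i _.
have Hi : (i <= d)%N by rewrite -ltnS.
rewrite hsumE mdeg_mon2 (subnKC Hi) eqxx.
by []. Qed.

Lemma hsum_ext d (a b : nat -> F) : (forall i, (i <= d)%N -> a i = b i) -> hsum d a = hsum d b.
Proof. by move=> H; apply: eq_bigr => i _; rewrite H // -ltnS. Qed.

Lemma homogen_hsum (c : {poly F}) l : size c = l.+1 -> homogen c = hsum l (fun i => c`_i).
Proof. by move=> Hs; rewrite /homogen /hsum Hs. Qed.

Lemma form_hsum (f : {mpoly F[2]}) d : f \is d.-homog ->
  f = hsum d (fun i => f@_(mon2 i (d - i))).
Proof.
move=> Hf; apply/mpolyP => t; rewrite hsumE.
have [Hd|Hd] := eqVneq (mdeg t) d; last exact: dhomog_nemf_coeff Hf Hd.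
rewrite {1}(mnm2_eta t); congr (f@_(mon2 _ _)).
by rewrite -Hd mdeg2 addKn.
Qed.
End H2.

Lemma min_exists (P : nat -> Prop) N : P N -> exists l, is_min_nat P l.
Proof.
elim/ltn_ind: N => N IH HN.
case: (classic (exists l', (l' < N)%N /\ P l')) => [[l' [Hl' Pl']]|Hno].
  exact: (IH l').
exists N; split => // l' Pl'.
rewrite leqNgt; apply/negP => Hlt; apply: Hno; by exists l'.
Qed.

Lemma is_min_nat_ext (P Q : nat -> Prop) l :
  (forall d, P d <-> Q d) -> is_min_nat P l -> is_min_nat Q l.
Proof.
move=> E [Pl Hm]; split; first exact/E.
by move=> l' /E; apply: Hm.
Qed.

Unset Implicit Arguments.

Theorem theorem2p3 (F : fieldType) (n : nat) (s : n.-tuple F) :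
  (1 <= n)%N -> has (fun a => a != 0) s ->
  let G := inv_form s in
  (forall c : {poly F}, charpoly_of s c ->
     [/\ annih G (homogen c) /\ inL (homogen c),
         tdeg (homogen c) = (size c).-1 &
         dehomogen (homogen c) = c]) /\
  (forall f : {mpoly F[2]}, annih G f -> inL f ->
     [/\ charpoly_of s (dehomogen f),
         (size (dehomogen f)).-1 = tdeg f &
         homogen (dehomogen f) = f]) /\
  (exists l, is_lin_complexity s l /\ is_lambda_form G l).
Proof.
case: n s => [//|n'] s _ _ G.
have HG : G = hsum n' (fun k => s`_k) by [].
have Pc : forall c : {poly F}, charpoly_of s c ->
     [/\ annih G (homogen c) /\ inL (homogen c),
         tdeg (homogen c) = (size c).-1 &
         dehomogen (homogen c) = c].
  move=> c [Hm Hcond].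
  have Hs : size c = ((size c).-1).+1 by rewrite prednK // size_poly_gt0 monic_neq0.
  move: Hcond; set l := (size c).-1 => /= Hcond.
  have Hcl : c`_l = 1 by move/monicP: Hm.
  rewrite (homogen_hsum Hs); split.
  - split; last exact: hsum_inL.
    rewrite /annih HG; apply/annih_hsum.
    case: Hcond => [Hn|Hk]; [by left | right => k Hk'; apply: Hk].
    by move: Hk'; lia.
  - by apply: hsum_tdeg; rewrite Hcl oner_neq0.
  - by rewrite dehomogen_hsum -Hs coefK.
have Pf : forall f : {mpoly F[2]}, annih G f -> inL f ->
     [/\ charpoly_of s (dehomogen f),
         (size (dehomogen f)).-1 = tdeg f &
         homogen (dehomogen f) = f].
  move=> f Ha [[d Hd] Hf0 Htop].
  have Htd : tdeg f = d := dhomog_uniq Hf0 (dhomog_msize Hd) Hd.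
  set a := fun i => f@_(mon2 i (d - i)).
  have Ef : f = hsum d a := form_hsum Hd.
  have Had : a d = 1 by rewrite /a subnn -Htd.
  set p := \poly_(i < d.+1) a i.
  have Hsp : size p = d.+1 by rewrite size_poly_eq // Had oner_neq0.
  have Hpa : hsum d a = homogen p.
    rewrite (homogen_hsum Hsp); apply: hsum_ext => i Hi.
    by rewrite coef_poly ltnS Hi.
  have Hdh : dehomogen f = p by rewrite Ef dehomogen_hsum.
  rewrite Hdh Htd Hsp; split => //; last by rewrite -Hpa -Ef.
  split.
    by apply/monicP; rewrite lead_coefE Hsp coef_poly ltnSn.
  rewrite /= Hsp /=.
  move: Ha; rewrite /annih Ef HG => /annih_hsum [Hl|Hk]; [by left|right].
  move=> k Hk'; rewrite -[X in _ = X](Hk k); last by move: Hk'; lia.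
  by apply: eq_bigr => i _; rewrite coef_poly ltn_ord.
split => //; split => //.
have [l Hl] : exists l, is_lin_complexity s l.
  apply: (@min_exists _ n'.+1); exists ('X^(n'.+1) : {poly F}); split; last by rewrite size_polyXn.
  split; first exact: monicXn.
  by rewrite /= size_polyXn; left.
exists l; split => //.
apply: (is_min_nat_ext _ Hl) => d; split.
  move=> [c [Hc Hd]]; exists (homogen c).
  by case: (Pc c Hc) => [[H1 H2] H3 _]; rewrite H3 Hd.
move=> [f [Ha [HL Ht]]]; exists (dehomogen f).
by case: (Pf f Ha HL) => H1 H2 _; rewrite H2 Ht.
Qed.
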